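(* Let $d\ge 1$, $q\ge 2$ be integers and let $\mathfrak{X}=H(d,q)$ be the Hamming scheme on $X=\{0,1,\dots,q-1\}^d$, with base vertex $u_0\in X$. Then for every $t=0,1,\dots,d$, \[ \mathrm{Hom}_0(X)+\mathrm{Hom}_1(X)+\cdots+\mathrm{Hom}_t(X)=L_0(X)+L_1(X)+\cdots+L_t(X). \]
   Context: $\mathcal{F}(X)$ denotes the space of real-valued functions on $X$ (identified with $\mathbb{R}^X$). The Hamming scheme $H(d,q)$ has relations $R_r=\{(x,y)\in X\times X : x,y \text{ differ in exactly } r \text{ coordinates}\}$, $r=0,\dots,d$. The shells are $X_r=\{x\in X : (u_0,x)\in R_r\}$. For $z\in X_j$ define $f_z\in\mathcal{F}(X)$ by $f_z(x)=1$ if $x\in X_i$ for some $i\ge j$ and $(x,z)\in R_{i-j}$, and $f_z(x)=0$ otherwise (equivalently, $z$ lies on a geodesic between $u_0$ and $x$ in the Hamming graph). Set $\mathrm{Hom}_j(X)=\mathrm{span}\{f_z : z\in X_j\}$. Let $E_0,\dots,E_d$ be the primitive idempotents of the Bose–Mesner algebra in the $Q$-polynomial ordering, i.e. $E_j$ is the orthogonal projection onto the eigenspace of the adjacency matrix of the Hamming graph (adjacency $=R_1$) for the eigenvalue $(q-1)d-qj$; $L_j(X)$ is the column space of $E_j$. *)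

(* Defs.v *)
From HB Require Import structures.
From mathcomp Require Import all_boot all_order all_algebra.
Set Implicit Arguments. Unset Strict Implicit. Unset Printing Implicit Defensive.
Import Order.TTheory GRing.Theory Num.Theory.
Local Open Scope ring_scope.

Definition hvert (d q : nat) : finType := {ffun 'I_d -> 'I_q}.

(* Hamming distance: (x,y) \in R_r  iff  hdist x y = r. *)
Definition hdist (d q : nat) (x y : hvert d q) : nat := #|[set i | x i != y i]|.

(* F(X) = R^X, represented as row vectors indexed by X (via enum_rank). *)
Definition fvec (R : fieldType) (d q : nat) (f : hvert d q -> R) : 'rV[R]_#|hvert d q| :=
  \row_i f (enum_val i).

Definition fz (R : fieldType) (d q : nat) (u0 z : hvert d q) : 'rV[R]_#|hvert d q| :=
  fvec (fun x => if (hdist u0 z <= hdist u0 x)%N && (hdist x z == hdist u0 x - hdist u0 z)%N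
                 then 1 else 0).

Definition HomSp (R : fieldType) (d q : nat) (u0 : hvert d q) (j : nat) :=
  (\sum_(z : hvert d q | hdist u0 z == j) <<fz R u0 z>>)%MS.

Definition hadj (R : fieldType) (d q : nat) : 'M[R]_#|hvert d q| :=
  \matrix_(i, k) (hdist (enum_val i) (enum_val k) == 1)%:R.

(* Eigenvalue theta_j = (q-1)d - qj (Q-polynomial ordering). *)
Definition theta (R : fieldType) (d q j : nat) : R :=
  ((q - 1) * d)%:R - (q * j)%:R.

(* L_j(X) = column space of E_j = the theta_j-eigenspace of the adjacency
   matrix (E_j is the orthogonal projection onto it; the adjacency matrix is
   symmetric so row/column conventions agree). *)
Definition Lsp (R : fieldType) (d q j : nat) :=
  eigenspace (hadj R d q) (theta R d q j).
Arguments HomSp R {d q} u0 j.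
Arguments Lsp R d q j.

(* Main.v *)
Require Import Defs.
From HB Require Import structures.
From mathcomp Require Import all_boot all_order all_algebra.
Set Implicit Arguments. Unset Strict Implicit. Unset Printing Implicit Defensive.
Import Order.TTheory GRing.Theory Num.Theory.
Local Open Scope ring_scope.

Lemma prod_bool (R : comNzRingType) (I : finType) (b : I -> bool) :
  \prod_(i : I) ((b i)%:R : R) = ([forall i, b i])%:R.
Proof.
case: forallP => H.
  by rewrite big1 // => i _; rewrite H.
have : ~~ [forall i, b i] by apply/forallP.
rewrite negb_forall => /existsP [i /negbTE Hi].
by rewrite (bigD1 i) //= Hi mul0r.
Qed.

Lemma fvec_ext (R : fieldType) d q (f g : hvert d q -> R) : f =1 g -> fvec f = fvec g.
Proof. by move=> H; apply/rowP => i; rewrite !mxE H. Qed.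

Lemma fvec_comb (R : fieldType) d q (a b : R) (f g : hvert d q -> R) :
  fvec (fun x => a * f x + b * g x) = a *: fvec f + b *: fvec g.
Proof. by apply/rowP => i; rewrite !mxE. Qed.

Lemma fvec_sum (R : fieldType) d q (I : finType) (P : pred I) (F : I -> hvert d q -> R) :
  fvec (fun x => \sum_(i | P i) F i x) = \sum_(i | P i) fvec (F i).
Proof. by apply/rowP => k; rewrite !mxE summxE; apply: eq_bigr => i _; rewrite mxE. Qed.

Lemma comb_sub (R : fieldType) d q m (S : 'M[R]_(m, #|hvert d q|)) (a b : R) (f g : hvert d q -> R) :
  (fvec f <= S)%MS -> (fvec g <= S)%MS -> (fvec (fun x => (a * f x + b * g x)%R) <= S)%MS.
Proof. by move=> Hf Hg; rewrite fvec_comb addmx_sub ?scalemx_sub. Qed.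

Definition prodf (R : fieldType) d q (G : 'I_d -> 'I_q -> R) (x : hvert d q) : R :=
  \prod_i G i (x i).

Lemma prodf_split (R : fieldType) d q (G : 'I_d -> 'I_q -> R) x k :
  prodf G x = G k (x k) * \prod_(i | i != k) G i (x i).
Proof. by rewrite /prodf (bigD1 k). Qed.

Lemma prodf_rest (R : fieldType) d q (G G' : 'I_d -> 'I_q -> R) (x : hvert d q) k :
  (forall i, i != k -> G i =1 G' i) ->
  \prod_(i | i != k) G i (x i) = \prod_(i | i != k) G' i (x i).
Proof. by move=> H; apply: eq_bigr => i /H ->. Qed.

Definition upd d q (z : hvert d q) k (b : 'I_q) : hvert d q :=
  [ffun i => if i == k then b else z i].

Lemma upd_k d q (z : hvert d q) k b : upd z k b k = b.
Proof. by rewrite ffunE eqxx. Qed.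
Lemma upd_ne d q (z : hvert d q) k b i : i != k -> upd z k b i = z i.
Proof. by rewrite ffunE => /negbTE ->. Qed.

From mathcomp Require Import zify ring.

Lemma geod d q (u0 x z : hvert d q) :
  (hdist u0 z <= hdist u0 x)%N && (hdist x z == hdist u0 x - hdist u0 z)%N =
  [forall i, (z i == u0 i) || (x i == z i)].
Proof.
rewrite /hdist.
set A := [set i | u0 i != z i]; set B := [set i | u0 i != x i]; set C := [set i | x i != z i].
case: forallP => H.
  have sAB : A \subset B.
    apply/subsetP => i; rewrite !inE => Hi; case/orP: (H i) => [/eqP E|/eqP E].
      by rewrite E eqxx in Hi.
    by rewrite E.
  have eC : C = B :\: A.
    apply/setP => i; rewrite !inE; case/orP: (H i) => /eqP E; rewrite E.
      by rewrite eqxx /= eq_sym.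
    by rewrite eqxx /= andNb.
  by rewrite subset_leq_card // eC cardsD (setIidPr sAB) eqxx.
have [i Hi] : exists i, ~~ ((z i == u0 i) || (x i == z i)).
  by apply/existsP; rewrite -negb_forall; apply/forallP.
have sB : B \subset A :|: C.
  apply/subsetP => j; rewrite !inE => Hj.
  case E: (u0 j == z j) => //=; by rewrite -(eqP E) eq_sym.
have iAC : i \in A :&: C by rewrite !inE; move: Hi; rewrite negb_or eq_sym => /andP [-> ->].
have h1 := subset_leq_card sB.
have h2 := cardsUI A C.
have h3 : (0 < #|A :&: C|)%N by apply/card_gt0P; exists i.
apply/negbTE/negP => /andP [h4 /eqP h5]; lia.
Qed.

Definition psi (R : fieldType) d q (u0 z : hvert d q) (i : 'I_d) (c : 'I_q) : R :=
  ((z i == u0 i) || (c == z i))%:R.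
Definition phi (R : fieldType) d q (u0 z : hvert d q) (i : 'I_d) (c : 'I_q) : R :=
  if z i == u0 i then 1 else q%:R * (c == z i)%:R - 1.
Definition hfun (R : fieldType) d q (u0 z : hvert d q) (T : {set 'I_d}) :=
  prodf (fun i c => if i \in T then phi R u0 z i c else psi R u0 z i c).

Lemma fz_hfun (R : fieldType) d q (u0 z : hvert d q) : fz R u0 z = fvec (hfun R u0 z set0).
Proof.
apply/rowP => k; rewrite !mxE /hfun /prodf.
under eq_bigr do rewrite inE.
by rewrite prod_bool -geod; case: ifP.
Qed.

Lemma hfun_split (R : fieldType) d q (u0 z : hvert d q) (T : {set 'I_d}) (x : hvert d q) k :
  hfun R u0 z T x = (if k \in T then phi R u0 z k (x k) else psi R u0 z k (x k)) *
     \prod_(i | i != k) (if i \in T then phi R u0 z i (x i) else psi R u0 z i (x i)).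
Proof. by rewrite /hfun (prodf_split _ _ k). Qed.

Lemma rest_eq (R : fieldType) d q (u0 z z' : hvert d q) (T T' : {set 'I_d}) x k :
  (forall i, i != k -> z' i = z i) -> (forall i, i != k -> (i \in T') = (i \in T)) ->
  \prod_(i | i != k) (if i \in T' then phi R u0 z' i (x i) else psi R u0 z' i (x i)) =
  \prod_(i | i != k) (if i \in T then phi R u0 z i (x i) else psi R u0 z i (x i)).
Proof.
move=> Hz HT; apply: eq_bigr => i Hi.
by rewrite HT // /phi /psi Hz.
Qed.

Lemma hA_step (R : fieldType) d q (u0 z : hvert d q) (T : {set 'I_d}) k (x : hvert d q) :
  k \in T -> z k != u0 k ->
  hfun R u0 z T x = q%:R * hfun R u0 z (T :\ k) x + (-1) * hfun R u0 (upd z k (u0 k)) (T :\ k) x.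
Proof.
move=> kT zk.
rewrite !(hfun_split _ _ _ _ _ k) !inE eqxx kT /=.
rewrite (@rest_eq R d q u0 z (upd z k (u0 k)) T (T :\ k) x k); first last.
- by move=> i ik; rewrite !inE ik.
- by move=> i ik; rewrite upd_ne.
rewrite (@rest_eq R d q u0 z z T (T :\ k) x k) //; last by move=> i ik; rewrite !inE ik.
rewrite /phi /psi upd_k eqxx (negbTE zk) /=.
by rewrite mulrA mulN1r mul1r mulrBl mul1r addrC.
Qed.

Lemma hA_same (R : fieldType) d q (u0 z : hvert d q) (T : {set 'I_d}) k (x : hvert d q) :
  z k == u0 k -> hfun R u0 z T x = hfun R u0 z (T :\ k) x.
Proof.
move=> zk; rewrite /hfun /prodf; apply: eq_bigr => i _.
rewrite !inE; case: (eqVneq i k) => [->|] //=.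
by rewrite /phi /psi zk; case: ifP.
Qed.

Lemma hB_step (R : fieldType) d q (u0 z : hvert d q) (T : {set 'I_d}) k (x : hvert d q) :
  (q%:R : R) != 0 -> k \notin T -> z k != u0 k ->
  hfun R u0 z T x = q%:R^-1 * hfun R u0 z (k |: T) x + q%:R^-1 * hfun R u0 (upd z k (u0 k)) (k |: T) x.
Proof.
move=> qn0 kT zk.
rewrite !(hfun_split _ _ _ _ _ k) !inE eqxx (negbTE kT) /=.
rewrite (@rest_eq R d q u0 z (upd z k (u0 k)) T (k |: T) x k); first last.
- by move=> i ik; rewrite !inE (negbTE ik).
- by move=> i ik; rewrite upd_ne.
rewrite (@rest_eq R d q u0 z z T (k |: T) x k) //; last by move=> i ik; rewrite !inE (negbTE ik).
rewrite /phi /psi upd_k eqxx (negbTE zk) /=.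
set P := (\prod_(i | _) _); set a := ((x k == z k)%:R : R).
by field.
Qed.

Lemma hB_same (R : fieldType) d q (u0 z : hvert d q) (T : {set 'I_d}) k (x : hvert d q) :
  z k == u0 k -> hfun R u0 z T x = hfun R u0 z (k |: T) x.
Proof.
move=> zk; rewrite /hfun /prodf; apply: eq_bigr => i _.
rewrite !inE; case: (eqVneq i k) => [->|] //=.
by rewrite /phi /psi zk; case: ifP.
Qed.

Lemma hdist_upd d q (u0 z : hvert d q) k : (hdist u0 (upd z k (u0 k)) <= hdist u0 z)%N.
Proof.
apply: subset_leq_card; apply/subsetP => i; rewrite !inE.
case: (eqVneq i k) => [->|ik]; first by rewrite upd_k eqxx.
by rewrite upd_ne.
Qed.

Lemma hA_ind (R : fieldType) d q (u0 : hvert d q) m (S : 'M[R]_(m, #|hvert d q|)) t :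
  (forall z, (hdist u0 z <= t)%N -> (fvec (hfun R u0 z set0) <= S)%MS) ->
  forall T z, (hdist u0 z <= t)%N -> (fvec (hfun R u0 z T) <= S)%MS.
Proof.
move=> H0 T; have [n] := ubnP #|T|; elim: n T => // n IH T; rewrite ltnS => HT z hz.
case: (set_0Vmem T) => [->|[k kT]]; first exact: H0.
have HTk : (#|T :\ k| < n)%N by move: (cardsD1 k T); rewrite kT; lia.
case: (eqVneq (z k) (u0 k)) => zk.
  rewrite (@fvec_ext _ _ _ _ (hfun R u0 z (T :\ k))); last by move=> x; apply: hA_same; apply/eqP.
  exact: IH.
rewrite (@fvec_ext _ _ _ _ (fun x => q%:R * hfun R u0 z (T :\ k) x + (-1) * hfun R u0 (upd z k (u0 k)) (T :\ k) x)); last by move=> x; apply: hA_step.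
apply: comb_sub; apply: IH => //.
exact: leq_trans (hdist_upd _ _ _) hz.
Qed.

Lemma hB_ind (R : fieldType) d q (u0 : hvert d q) m (S : 'M[R]_(m, #|hvert d q|)) t :
  (q%:R : R) != 0 ->
  (forall z, (hdist u0 z <= t)%N -> (fvec (hfun R u0 z setT) <= S)%MS) ->
  forall T z, (hdist u0 z <= t)%N -> (fvec (hfun R u0 z T) <= S)%MS.
Proof.
move=> qn0 H0 T; have [n] := ubnP #|~: T|; elim: n T => // n IH T; rewrite ltnS => HT z hz.
case: (set_0Vmem (~: T)) => [E|[k kT]].
  have -> : T = setT by rewrite -(setCK T) E setC0.
  exact: H0.
have HTk : (#|~: (k |: T)| < n)%N.
  have -> : ~: (k |: T) = (~: T) :\ k by apply/setP => i; rewrite !inE negb_or andbC.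
  by move: (cardsD1 k (~: T)); rewrite kT; lia.
rewrite inE in kT.
case: (eqVneq (z k) (u0 k)) => zk.
  rewrite (@fvec_ext _ _ _ _ (hfun R u0 z (k |: T))); last by move=> x; apply: hB_same; apply/eqP.
  exact: IH.
rewrite (@fvec_ext _ _ _ _ (fun x => q%:R^-1 * hfun R u0 z (k |: T) x + q%:R^-1 * hfun R u0 (upd z k (u0 k)) (k |: T) x)); last by move=> x; apply: hB_step.
apply: comb_sub; apply: IH => //.
exact: leq_trans (hdist_upd _ _ _) hz.
Qed.

Lemma sum_enum_val (R : nmodType) (T : finType) (F : T -> R) :
  \sum_(l < #|T|) F (enum_val l) = \sum_x F x.
Proof.
rewrite [RHS](reindex (@enum_val T (mem T))) //=.
apply: onW_bij; apply: enum_val_bij.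
Qed.

Lemma sum_bool_card (R : nzRingType) (I : finType) (b : pred I) :
  \sum_(i : I) ((b i)%:R : R) = #|[set i | b i]|%:R.
Proof.
rewrite (eq_bigr (fun i => if b i then 1 else 0)); last by move=> i _; case: (b i).
rewrite -big_mkcond sumr_const; congr (_ *+ _).
by apply: eq_card => i; rewrite inE.
Qed.

Lemma diff1 (R : nzRingType) d q (x y : hvert d q) :
  ((hdist x y == 1)%N%:R : R) = \sum_i ([forall j, (x j != y j) == (j == i)])%:R.
Proof.
rewrite /hdist; set D := [set j | x j != y j].
have E : forall i, [forall j, (x j != y j) == (j == i)] = (D == [set i]).
  move=> i; apply/forallP/eqP => [H|ED] ; last by move/setP: ED => ED j; move: (ED j); rewrite !inE => ->.
  by apply/setP => j; rewrite !inE; apply/eqP: (H j).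
under eq_bigr do rewrite E.
clearbody D.
case: (boolP (#|D| == 1)%N) => [/cards1P [i0 ->]|HD].
  rewrite (bigD1 i0) //= eqxx big1 ?addr0 // => i ii0.
  by rewrite (inj_eq set1_inj) eq_sym (negbTE ii0).
rewrite big1 // => i _; case: eqP => // ED.
by rewrite ED cards1 eqxx in HD.
Qed.

Lemma phi_sum (R : fieldType) d q (u0 z : hvert d q) i :
  \sum_(c : 'I_q) phi R u0 z i c = if z i == u0 i then q%:R else 0.
Proof.
rewrite /phi; case: ifP => _; first by rewrite sumr_const card_ord.
rewrite sumrB -mulr_sumr sumr_const card_ord (bigD1 (z i)) //= eqxx big1 ?addr0 ?mulr1 ?subrr //.
by move=> c /negbTE ->.
Qed.

Lemma hfunT (R : fieldType) d q (u0 z : hvert d q) x :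
  hfun R u0 z setT x = \prod_j phi R u0 z j (x j).
Proof. by rewrite /hfun /prodf; apply: eq_bigr => j _; rewrite inE. Qed.

Lemma row_step (R : fieldType) d q (u0 z y : hvert d q) i :
  \sum_(x : hvert d q) hfun R u0 z setT x * ([forall j, (x j != y j) == (j == i)])%:R =
  (if z i == u0 i then q%:R - 1 else -1) * hfun R u0 z setT y.
Proof.
pose F j c : R := ((c != y j) == (j == i))%:R * phi R u0 z j c.
have E1 : forall x : hvert d q, hfun R u0 z setT x * ([forall j, (x j != y j) == (j == i)])%:R =
    \prod_j F j (x j).
  by move=> x; rewrite hfunT -prod_bool -big_split /=; apply: eq_bigr => j _; rewrite mulrC.
under eq_bigr do rewrite E1.
rewrite -(bigA_distr_bigA F).
rewrite [in RHS]hfunT [in RHS](bigD1 i) //= (bigD1 i) //=.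
rewrite (@eq_bigr _ _ _ _ _ _ _ (fun j => phi R u0 z j (y j))); last first.
  move=> j ji; rewrite (bigD1 (y j)) //= /F eqxx (negbTE ji) /= mul1r big1 ?addr0 //.
  by move=> c cy; rewrite cy /= mul0r.
set P := \prod_(j | _) _.
have -> : \sum_c F i c = \sum_c phi R u0 z i c - phi R u0 z i (y i).
  rewrite (bigD1 (y i)) //= [X in _ = X - _](bigD1 (y i)) //= /F !eqxx /= mul0r add0r addrAC subrr add0r.
  by apply: eq_bigr => c cy; rewrite cy eqxx mul1r.
rewrite phi_sum /phi; case: ifP => _; first by rewrite mul1r.
by rewrite sub0r mulN1r mulNr.
Qed.

Lemma g_eigen (R : fieldType) d q (u0 z : hvert d q) : (0 < q)%N ->
  (fvec (hfun R u0 z setT) <= Lsp R d q (hdist u0 z))%MS.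
Proof.
move=> q0; apply/eigenspaceP; apply/rowP => k.
rewrite !mxE.
under eq_bigr do rewrite !mxE.
set y := enum_val k.
rewrite (sum_enum_val (fun x => hfun R u0 z setT x * (hdist x y == 1)%N%:R)).
under eq_bigr do rewrite diff1 mulr_sumr.
rewrite exchange_big /=.
under eq_bigr do rewrite row_step.
rewrite -mulr_suml; congr (_ * _).
rewrite (eq_bigr (fun i => (q%:R - 1) - q%:R * ((u0 i != z i))%:R)); last first.
  move=> i _; rewrite [u0 i == _]eq_sym; case: (z i == u0 i) => /=; rewrite ?mulr0 ?mulr1 ?subr0 //; ring.
rewrite sumrB -mulr_sumr sum_bool_card sumr_const card_ord /theta /hdist.
rewrite natrM natrM natrB //; ring.
Qed.

Definition kfun (R : fieldType) d q (u0 z : hvert d q) (T : {set 'I_d}) :=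
  prodf (fun i c => if i \in T then ((c == z i)%:R : R) else psi R u0 z i c).

Lemma sum_ind1 (R : fieldType) q (a c : 'I_q) :
  \sum_(b | b != c) ((a == b)%:R : R) = 1 - (a == c)%:R.
Proof.
have H : \sum_b ((a == b)%:R : R) = 1.
  by rewrite (bigD1 a) //= eqxx big1 ?addr0 // => b ba; rewrite eq_sym (negbTE ba).
move: H; rewrite (bigD1 c) //= => H.
move: H; set x := ((a == c)%:R : R); set S := \sum_(b | _) _ => H.
by rewrite -H addrAC subrr add0r.
Qed.

Lemma k_ind (R : fieldType) d q (u0 : hvert d q) m (S : 'M[R]_(m, #|hvert d q|)) :
  (forall z, (fvec (hfun R u0 z set0) <= S)%MS) ->
  forall T z, (fvec (kfun R u0 z T) <= S)%MS.
Proof.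
move=> H0 T; have [n] := ubnP #|T|; elim: n T => // n IH T; rewrite ltnS => HT z.
case: (set_0Vmem T) => [->|[k kT]].
  rewrite (@fvec_ext _ _ _ _ (hfun R u0 z set0)); first exact: H0.
  by move=> x; rewrite /kfun /hfun /prodf; apply: eq_bigr => i _; rewrite inE.
have HTk : (#|T :\ k| < n)%N by move: (cardsD1 k T); rewrite kT; lia.
case: (eqVneq (z k) (u0 k)) => zk; last first.
  rewrite (@fvec_ext _ _ _ _ (kfun R u0 z (T :\ k))); first exact: IH.
  move=> x; rewrite /kfun /prodf; apply: eq_bigr => i _; rewrite !inE.
  case: (eqVneq i k) => [->|] //=; rewrite kT /psi.
  by rewrite (negbTE zk).
rewrite (@fvec_ext _ _ _ _ (fun x => 1 * kfun R u0 z (T :\ k) x +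
   (-1) * \sum_(b | b != u0 k) kfun R u0 (upd z k b) (T :\ k) x)).
  apply: comb_sub; first exact: IH.
  rewrite fvec_sum; apply: summx_sub => b _; exact: IH.
move=> x; rewrite /kfun !(prodf_split _ _ k) !inE eqxx kT /=.
rewrite (eq_bigr (fun b => (x k == b)%:R * \prod_(i | i != k)
    (if i \in T :\ k then ((x i == z i)%:R : R) else psi R u0 z i (x i)))); last first.
  move=> b bu; rewrite (prodf_split _ _ k) !inE eqxx /= /psi upd_k (negbTE bu) /=.
  congr (_ * _); apply: eq_bigr => i ik; rewrite /psi upd_ne //.
rewrite -mulr_suml sum_ind1 /psi zk eqxx /= mul1r.
set P := \prod_(i | _) _; set P' := \prod_(i | _) _.
have -> : P' = P by apply: eq_bigr => i ik; rewrite !inE ik.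
by rewrite mulrBl mul1r mulN1r opprB addrC subrK.
Qed.

Lemma rank_sum_le (F : fieldType) (I : finType) (P : pred I) n (A_ : I -> 'M[F]_n) :
  (\rank (\sum_(i | P i) A_ i)%MS <= \sum_(i | P i) \rank (A_ i))%N.
Proof.
elim/big_ind2: _ => [|A a B b HA HB|i _]; first by rewrite mxrank0.
  exact: leq_trans (mxrank_adds_leqif A B).1 (leq_add HA HB).
by [].
Qed.

Lemma cap_from_rank (F : fieldType) n (A B : 'M[F]_n) a b :
  (\rank A <= a)%N -> (\rank B <= b)%N -> \rank (A + B)%MS = (a + b)%N -> (A :&: B = 0)%MS.
Proof.
move=> ha hb hab; apply/eqP; rewrite -mxrank_eq0; apply/eqP.
have := mxrank_sum_cap A B; lia.
Qed.

Lemma eig_cap (R : realFieldType) d q t : (0 < q)%N ->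
  ((\sum_(j < d.+1 | (j < t.+1)%N) Lsp R d q j) :&: (\sum_(j < d.+1 | ~~ (j < t.+1)%N) Lsp R d q j) = 0)%MS.
Proof.
move=> q0.
have inj : {in predT &, injective (fun j : 'I_d.+1 => theta R d q j)}.
  move=> i j _ _; rewrite /theta => /addrI /oppr_inj /eqP; rewrite eqr_nat eqn_pmul2l // => /eqP.
  exact: val_inj.
have := mxdirect_sum_eigenspace (hadj R d q) inj.
rewrite mxdirectE /= => /eqP E.
move: E; rewrite [X in \rank X](bigID (fun j : 'I_d.+1 => (j < t.+1)%N)) [RHS](bigID (fun j : 'I_d.+1 => (j < t.+1)%N)) /= => E.
apply: cap_from_rank E.
  exact: (rank_sum_le (fun j : 'I_d.+1 => (j < t.+1)%N) (fun j : 'I_d.+1 => Lsp R d q j)).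
exact: (rank_sum_le (fun j : 'I_d.+1 => ~~ (j < t.+1)%N) (fun j : 'I_d.+1 => Lsp R d q j)).
Qed.

Theorem proposition1p5 (R : realFieldType) (d q : nat) (hd : (1 <= d)%N) (hq : (2 <= q)%N)
  (u0 : hvert d q) (t : nat) (ht : (t <= d)%N) :
  ((\sum_(j < t.+1) HomSp R u0 j) == (\sum_(j < t.+1) Lsp R d q j))%MS.
Proof.
have q0 : (0 < q)%N by lia.
have qn0 : (q%:R : R) != 0 by rewrite pnatr_eq0 -lt0n.
set LHS := (\sum_(j < t.+1) HomSp R u0 j)%MS.
set RHS := (\sum_(j < t.+1) Lsp R d q j)%MS.
pose Gs s := (\sum_(z : hvert d q | (hdist u0 z <= s)%N) <<fvec (hfun R u0 z setT)>>)%MS.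
pose Gg := (\sum_(z : hvert d q | (t < hdist u0 z)%N) <<fvec (hfun R u0 z setT)>>)%MS.
have hdd : forall z : hvert d q, (hdist u0 z <= d)%N.
  by move=> z; apply: leq_trans (max_card _) _; rewrite card_ord.
have fzL : forall z, (hdist u0 z <= t)%N -> (fz R u0 z <= LHS)%MS.
  move=> z hz; have hz' : (hdist u0 z < t.+1)%N by [].
  by rewrite (sumsmx_sup (Ordinal hz')) //= /HomSp (sumsmx_sup z) // genmxE.
have gL : forall z, (hdist u0 z <= t)%N -> (fvec (hfun R u0 z setT) <= LHS)%MS.
  move=> z hz; apply: (@hA_ind R d q u0 _ LHS t) => // w hw; rewrite -fz_hfun; exact: fzL.
have gG : forall s T z, (hdist u0 z <= s)%N -> (fvec (hfun R u0 z T) <= Gs s)%MS.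
  move=> s T z hz; apply: (@hB_ind R d q u0 _ (Gs s) s) => // w hw.
  by rewrite (sumsmx_sup w) // genmxE.
have LG : (LHS <= Gs t)%MS.
  apply/sumsmx_subP => j _; apply/sumsmx_subP => z /eqP hz.
  rewrite genmxE fz_hfun; apply: gG; rewrite hz; exact: (ltn_ord j).
have GL : (Gs t <= LHS)%MS.
  by apply/sumsmx_subP => z hz; rewrite genmxE; apply: gL.
have GR : (Gs t <= RHS)%MS.
  apply/sumsmx_subP => z hz; rewrite genmxE.
  have hz' : (hdist u0 z < t.+1)%N by [].
  by rewrite (sumsmx_sup (Ordinal hz')) //= g_eigen.
have full : (1%:M <= Gs d)%MS.
  apply/row_subP => k; rewrite row1.
  have -> : (delta_mx 0 k : 'rV[R]_#|hvert d q|) = fvec (kfun R u0 (enum_val k) setT).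
    apply/rowP => l; rewrite !mxE /kfun /prodf.
    under eq_bigr do rewrite inE.
    rewrite prod_bool.
    have -> : [forall i, enum_val l i == enum_val k i] = (l == k).
      apply/forallP/eqP => [H|-> i //].
      apply: enum_val_inj; apply/ffunP => i; exact/eqP.
    by rewrite eqxx.
  apply: k_ind => z; apply: gG; exact: hdd.
have split : (Gs d <= Gs t + Gg)%MS.
  apply/sumsmx_subP => z _; case: (leqP (hdist u0 z) t) => h.
    by apply: submx_trans (addsmxSl _ _); rewrite (sumsmx_sup z).
  by apply: submx_trans (addsmxSr _ _); rewrite (sumsmx_sup z).
have ht' : (t.+1 <= d.+1)%N by [].
have eR : RHS = (\sum_(j < d.+1 | (j < t.+1)%N) Lsp R d q j)%MS.
  exact: (big_ord_widen _ (fun j => Lsp R d q j) ht').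
have GgC : (Gg <= \sum_(j < d.+1 | ~~ (j < t.+1)%N) Lsp R d q j)%MS.
  apply/sumsmx_subP => z hz; rewrite genmxE.
  have hz' : (hdist u0 z < d.+1)%N by rewrite ltnS.
  by rewrite (sumsmx_sup (Ordinal hz')) /= ?g_eigen // -leqNgt.
have cap := eig_cap R d t q0.
apply/andP; split; first exact: submx_trans LG GR.
apply: submx_trans GL.
have : (RHS <= Gs t + Gg)%MS by apply: submx_trans (submx_trans (submx1 _) full) split.
case/sub_addsmxP => [[u1 u2] /= E].
have H2 : (u2 *m Gg <= (\sum_(j < d.+1 | (j < t.+1)%N) Lsp R d q j) :&: (\sum_(j < d.+1 | ~~ (j < t.+1)%N) Lsp R d q j))%MS.
  rewrite sub_capmx; apply/andP; split; last by apply: submx_trans (submxMl _ _) GgC.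
  rewrite -eR.
  have -> : u2 *m Gg = RHS - u1 *m Gs t by rewrite E addrC addKr.
  by rewrite addmx_sub ?eqmx_opp // (submx_trans (submxMl _ _) GR).
move: H2; rewrite cap submx0 => /eqP H2.
by rewrite E H2 addr0 submxMl.
Qed.
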